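(* Let $\Gamma:=\mathrm{Cos}(G,H,A)$ be a vertex-transitive graph and let $B$ be a subset of $A$. If every $\varphi\in\mathrm{Aut}(\Gamma)_H$ fixes the set $\{Hx\mid x\in B\}$ setwise, then every $\varphi\in\mathrm{Aut}(\Gamma)_H$ fixes the set $\{Hx\mid x\in\langle B\rangle\}$ setwise.
   Context: $G$ is a finite group, $H\le G$, and $A\subseteq G$ is a union of $(H,H)$-double cosets with $A=A^{-1}$. The coset graph $\mathrm{Cos}(G,H,A)$ has vertex set the right cosets of $H$ in $G$, with $Hx$ adjacent to $Hy$ iff $yx^{-1}\in A$ (i.e. $Hyx^{-1}H\subseteq HAH$). $\mathrm{Aut}(\Gamma)_H$ denotes the stabilizer in $\mathrm{Aut}(\Gamma)$ of the vertex $H$. *)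

(* Defs.v *)
From mathcomp Require Import all_boot all_fingroup.
Set Implicit Arguments. Unset Strict Implicit. Unset Printing Implicit Defensive.
Local Open Scope group_scope.

Section CosetGraph.
Variable gT : finGroupType.

Definition cos_vertices (G H : {set gT}) : {set {set gT}} := rcosets H G.

(* Hx ~ Hy iff y x^-1 \in A (well defined since A is a union of (H,H)-double
   cosets). *)
Definition cos_adj (G H A : {set gT}) (u v : {set gT}) : bool :=
  [exists x in G, exists y in G,
     [&& u == H :* x, v == H :* y & y * x^-1 \in A]].

Definition cos_aut (G H A : {set gT}) (phi : {perm {set gT}}) : Prop :=
  phi @: cos_vertices G H = cos_vertices G H /\
  {in cos_vertices G H &, forall u v, cos_adj G H A (phi u) (phi v) = cos_adj G H A u v}.

Definition cos_aut_stab (G H A : {set gT}) (phi : {perm {set gT}}) : Prop :=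
  cos_aut G H A phi /\ phi H = H.

Definition vertex_transitive_cos (G H A : {set gT}) : Prop :=
  {in cos_vertices G H &, forall u v, exists phi, cos_aut G H A phi /\ phi u = v}.

Definition union_double_cosets (H A : {set gT}) : Prop := H * A * H = A.

End CosetGraph.

(* Main.v *)
Require Import Defs.
From mathcomp Require Import all_boot all_fingroup.
Local Open Scope group_scope.

Section Aux.
Variable gT : finGroupType.

Lemma adjR (G : {group gT}) (H A : {set gT}) g X Y : g \in G ->
  cos_adj G H A X Y -> cos_adj G H A (X :* g) (Y :* g).
Proof.
move=> gG /existsP [x /andP [xG /existsP [y /andP [yG /and3P [/eqP -> /eqP -> yx]]]]].
apply/existsP; exists (x * g); rewrite groupM //=; apply/existsP; exists (y * g).
by rewrite groupM // !rcosetM !eqxx /= invMg mulgA mulgK.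
Qed.

Lemma adjRE (G : {group gT}) (H A : {set gT}) g X Y : g \in G ->
  cos_adj G H A (X :* g) (Y :* g) = cos_adj G H A X Y.
Proof.
move=> gG; apply/idP/idP; last exact: adjR.
by move/(@adjR G H A g^-1 _ _ (groupVr gG)); rewrite -!rcosetM mulgV !rcoset1.
Qed.

Definition Rp (g : gT) : {perm {set gT}} := perm (@rcoset_inj gT g).

Lemma RpE g X : Rp g X = X :* g.
Proof. by rewrite permE. Qed.

Lemma perm_sub_eq (phi : {perm {set gT}}) (S : {set {set gT}}) :
  phi @: S \subset S -> phi @: S = S.
Proof.
by move=> sub; apply/eqP; rewrite eqEcard sub (card_imset _ (@perm_inj _ phi)) leqnn.
Qed.

Lemma Rp_aut (G H : {group gT}) (A : {set gT}) g : g \in G ->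
  cos_aut G H A (Rp g).
Proof.
move=> gG; split.
  apply: perm_sub_eq; apply/subsetP => u /imsetP [v vV ->]. move: vV; rewrite /cos_vertices. move/rcosetsP=> [x xG ->]. rewrite RpE -rcosetM; apply/rcosetsP; exists (x*g); rewrite ?groupM //.
by move=> u v _ _; rewrite !RpE adjRE.
Qed.

Lemma aut_comp (G H A : {set gT}) p q :
  cos_aut G H A p -> cos_aut G H A q -> cos_aut G H A (p * q).
Proof.
move=> [Ep Ap] [Eq Aq].
have E : (p * q) @: cos_vertices G H = q @: (p @: cos_vertices G H).
  by rewrite -imset_comp; apply: eq_imset => x; rewrite permM.
split; first by rewrite E Ep Eq.
move=> u v uV vV; rewrite !permM Aq ?Ap //.
  by rewrite -Ep imset_f.
by rewrite -Ep imset_f.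
Qed.

End Aux.
Arguments Rp {gT}. Arguments Rp_aut {gT}. Arguments aut_comp {gT}. Arguments perm_sub_eq {gT}. Arguments RpE {gT}.

Theorem lemma3p4 (gT : finGroupType) (G H : {group gT}) (A B : {set gT}) :
  H \subset G -> A \subset G -> union_double_cosets H A -> A^-1 = A ->
  vertex_transitive_cos G H A ->
  B \subset A ->
  (forall phi, cos_aut_stab G H A phi ->
     phi @: [set H :* x | x in B] = [set H :* x | x in B]) ->
  forall phi, cos_aut_stab G H A phi ->
     phi @: [set H :* x | x in <<B>>] = [set H :* x | x in <<B>>].
Proof.
move=> sHG sAG _ _ _ sBA hyp.
have sBG : B \subset G := subset_trans sBA sAG.
have sgBG : <<B>> \subset G by rewrite gen_subG.
have key : forall phi, cos_aut_stab G H A phi -> forall x g b,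
    x \in G -> g \in G -> b \in B -> phi (H :* x) = H :* g ->
    exists2 b', b' \in B & phi (H :* (b * x)) = H :* (b' * g).
  move=> phi [aut fixH] x g b xG gG bB e.
  pose psi := Rp x * phi * Rp g^-1.
  have st : cos_aut_stab G H A psi.
    split; first by apply: aut_comp; [apply: aut_comp => //|]; apply: Rp_aut;
      rewrite ?groupV.
    by rewrite /psi !permM !RpE e -rcosetM mulgV rcoset1.
  have : psi (H :* b) \in [set H :* x | x in B].
    by rewrite -(hyp _ st); apply: imset_f; apply: imset_f.
  case/imsetP => b' b'B e2; exists b' => //.
  by rewrite (rcosetM _ b' g) -e2 /psi !permM !RpE -!rcosetM mulVg mulg1.
have ind : forall n (c : 'I_n -> gT), (forall i, c i \in B) ->
    forall phi, cos_aut_stab G H A phi ->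
    exists2 g, g \in <<B>> & phi (H :* \prod_i c i) = H :* g.
  elim=> [|n IH] c cB phi st.
    by exists 1; rewrite ?group1 // big_ord0 !rcoset1 st.2.
  rewrite big_ord_recl.
  have [g gB e] := IH (fun i => c (lift ord0 i)) (fun i => cB _) phi st.
  have x'B : \prod_(i < n) c (lift ord0 i) \in <<B>>.
    by apply: group_prod => i _; apply: mem_gen.
  have [b' b'B e2] := key phi st _ _ (c ord0) (subsetP sgBG _ x'B)
    (subsetP sgBG _ gB) (cB _) e.
  by exists (b' * g); rewrite // groupM // mem_gen.
move=> phi st; apply: perm_sub_eq; apply/subsetP => u /imsetP [v /imsetP [y yB ->] ->].
move/gen_prodgP: yB => [n [c cB ->]].
have [g gB ->] := ind n c cB phi st.
exact: imset_f.
Qed.
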